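(* Let $G$ be a compact group and let $x\in G$ be an element such that $Pr(\langle x\rangle,G)>0$. Then there is a positive integer $e$ such that $x^e$ is contained in an abstract (not necessarily closed) subgroup $N$ of $G$ which is torsion-free, abelian, normal in $G$, and contained in $FC(G)$.
   Context: For a closed subgroup $H$ of a compact group $G$, $Pr(H,G)=(\mu_H\times\mu_G)(\{(h,g)\in H\times G: hg=gh\})$, where $\mu_H,\mu_G$ are the normalized Haar measures. $\langle x\rangle$ is the closed subgroup topologically generated by $x$. $FC(G)$ denotes the set of all elements $y\in G$ whose centralizer $C_G(y)$ has finite index in $G$ (an abstract subgroup of $G$). *)

(* Defs.v *)
From HB Require Import structures.
From mathcomp Require Import all_boot all_order all_algebra.
From mathcomp Require Import all_classical all_reals all_analysis.
Set Implicit Arguments. Unset Strict Implicit. Unset Printing Implicit Defensive.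
Import Order.TTheory GRing.Theory Num.Theory.
Local Open Scope classical_set_scope.
Local Open Scope ring_scope.

Record compact_group (G : ptopologicalType) := CompactGroup {
  gmul : G -> G -> G;
  ginv : G -> G;
  gone : G;
  gmulA : forall a b c, gmul a (gmul b c) = gmul (gmul a b) c;
  gmul1 : forall a, gmul gone a = a;
  gmulV : forall a, gmul (ginv a) a = gone;
  gmul_cont : continuous (fun p : G * G => gmul p.1 p.2);
  ginv_cont : continuous ginv;
  g_compact : compact [set: G];
  g_hausdorff : hausdorff_space G
}.

Section defs.
Variables (G : ptopologicalType) (cg : compact_group G).
Local Notation "a * b" := (gmul cg a b).

Fixpoint gpow (x : G) (n : nat) : G :=
  match n with O => gone cg | S m => x * gpow x m end.

Definition cyc (x : G) : set G :=
  [set y | exists n : nat, y = gpow x n \/ y = ginv cg (gpow x n)].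

(* <x> : the closed subgroup topologically generated by x *)
Definition topgen (x : G) : set G := closure (cyc x).

Definition centralizer (y : G) : set G := [set g | y * g = g * y].

(* FC(G): elements whose centralizer has finite index (finitely many
   left cosets g C_G(y)) *)
Definition FC : set G :=
  [set y | exists s : seq G,
      forall g : G, exists2 t, t \in s & centralizer y (ginv cg t * g)].

Definition abstract_subgroup (N : set G) : Prop :=
  [/\ N (gone cg),
      (forall a b, N a -> N b -> N (a * b)) &
      (forall a, N a -> N (ginv cg a))].

Definition torsion_free (N : set G) : Prop :=
  forall y n, N y -> (0 < n)%N -> gpow y n = gone cg -> y = gone cg.

Definition abelian_set (N : set G) : Prop :=
  forall a b, N a -> N b -> a * b = b * a.

Definition normal_in_G (N : set G) : Prop :=
  forall g a, N a -> N (g * a * ginv cg g).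

Definition Borel := g_sigma_algebraType (@open G).

Variable R : realType.

(* mu is a (normalized) Haar measure of the closed subgroup H, viewed as a
   Radon probability measure on G concentrated on H and invariant under left
   translation by elements of H. *)
Definition haar_of (H : set G) (mu : probability Borel R) : Prop :=
  [/\ mu H = 1%E,
      (forall h (A : set Borel), H h -> measurable A ->
          mu [set h * a | a in A] = mu A),
      (forall A : set Borel, measurable A ->
          mu A = ereal_inf [set mu U | U in [set U : set G | open U /\ A `<=` U]]) &
      (forall U : set G, open U ->
          mu U = ereal_sup [set mu K | K in [set K : set G | compact K /\ K `<=` U]])].

(* Pr(H,G) = (mu_H x mu_G){(h,g) | hg = gh} computed as the iterated
   (Fubini) integral  int_H mu_G(C_G(h)) d mu_H(h). *)
Definition comm_prob (muH muG : probability Borel R) : \bar R :=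
  (\int[muH]_(h in [set: Borel]) muG (centralizer h : set Borel))%E.

End defs.

(* Main.v *)
Require Import Defs.
From HB Require Import structures.
From mathcomp Require Import all_boot all_order all_algebra.
From mathcomp Require Import all_classical all_reals all_analysis.
From mathcomp Require Import ring zify.
Set Implicit Arguments. Unset Strict Implicit. Unset Printing Implicit Defensive.
Import Order.TTheory GRing.Theory Num.Theory.
Import HBNNSimple.
Local Open Scope classical_set_scope.

Section Main.
Variables (G : ptopologicalType) (cg : compact_group G).
Local Notation m := (gmul cg).
Local Notation inv := (ginv cg).
Local Notation one := (gone cg).
Local Notation pw := (gpow cg).
Local Notation comm a b := (m a b = m b a).

Lemma gA a b c : m a (m b c) = m (m a b) c. Proof. exact: gmulA. Qed.
Lemma g1m a : m one a = a. Proof. exact: gmul1. Qed.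
Lemma gVm a : m (inv a) a = one. Proof. exact: gmulV. Qed.

Lemma gmV a : m a (inv a) = one.
Proof.
by rewrite -[m a (inv a)]g1m -(gVm (inv a)) -gA (gA (inv a) a) gVm g1m.
Qed.

Lemma gm1 a : m a one = a.
Proof. by rewrite -(gVm a) gA gmV g1m. Qed.

Lemma gKV a b : m (inv a) (m a b) = b. Proof. by rewrite gA gVm g1m. Qed.
Lemma gK a b : m a (m (inv a) b) = b. Proof. by rewrite gA gmV g1m. Qed.
Lemma gKr a b : m (m b a) (inv a) = b. Proof. by rewrite -gA gmV gm1. Qed.
Lemma gKVr a b : m (m b (inv a)) a = b. Proof. by rewrite -gA gVm gm1. Qed.

Lemma gI a b c : m a b = m a c -> b = c.
Proof. by move=> e; rewrite -(gKV a b) e gKV. Qed.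
Lemma gIr a b c : m b a = m c a -> b = c.
Proof. by move=> e; rewrite -(gKr a b) e gKr. Qed.

Lemma gv_uniq a b : m a b = one -> inv a = b.
Proof. by move=> e; apply: (@gI a); rewrite gmV e. Qed.

Lemma gvK a : inv (inv a) = a. Proof. by apply: gv_uniq; rewrite gVm. Qed.
Lemma gv1 : inv one = one. Proof. by apply: gv_uniq; rewrite g1m. Qed.
Lemma gvM a b : inv (m a b) = m (inv b) (inv a).
Proof. by apply: gv_uniq; rewrite -gA (gA b) gmV g1m gmV. Qed.

Lemma pwS a n : pw a n.+1 = m a (pw a n). Proof. by []. Qed.
Lemma pw0 a : pw a 0 = one. Proof. by []. Qed.
Lemma pw1 a : pw a 1 = a. Proof. by rewrite pwS pw0 gm1. Qed.
Lemma pwD a i j : pw a (i + j) = m (pw a i) (pw a j).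
Proof. by elim: i => [|i IH]; rewrite ?g1m // addSn pwS IH gA. Qed.
Lemma pwSr a n : pw a n.+1 = m (pw a n) a.
Proof. by rewrite -addn1 pwD pw1. Qed.
Lemma pwM a i j : pw a (i * j) = pw (pw a i) j.
Proof. by elim: j => [|j IH]; rewrite ?muln0 // mulnS pwD IH. Qed.
Lemma pw_one n : pw one n = one.
Proof. by elim: n => [|n IH] //; rewrite pwS IH g1m. Qed.

Lemma comm_pw a b n : comm a b -> comm (pw a n) b.
Proof.
move=> ab; elim: n => [|n IH]; first by rewrite pw0 g1m gm1.
by rewrite pwS -gA IH gA ab gA.
Qed.
Lemma comm_sym a b : comm a b -> comm b a. Proof. by move=> ->. Qed.
Lemma comm_mul a b c : comm a b -> comm a c -> comm a (m b c).
Proof. by move=> ab ac; rewrite gA ab -gA ac gA. Qed.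
Lemma comm_inv a b : comm a b -> comm (inv a) b.
Proof.
by move=> ab; apply: (@gI a); rewrite gK gA ab gKr.
Qed.
Lemma comm_one a : comm one a. Proof. by rewrite g1m gm1. Qed.
Lemma comm_refl a : comm a a. Proof. by []. Qed.

Lemma pw_mul a b n : comm a b -> pw (m a b) n = m (pw a n) (pw b n).
Proof.
move=> ab; elim: n => [|n IH]; first by rewrite !pw0 g1m.
rewrite !pwS IH -!gA; congr (m a _); rewrite !gA; congr (m _ (pw b n)).
by apply/esym/comm_pw.
Qed.

Lemma inv_pw a n : inv (pw a n) = pw (inv a) n.
Proof.
elim: n => [|n IH]; first by rewrite !pw0 gv1.
by rewrite pwS gvM IH -pwSr.
Qed.

Definition conj g a := m (m g a) (inv g).
Lemma conjM g a b : conj g (m a b) = m (conj g a) (conj g b).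
Proof. by rewrite /conj -!gA gKV. Qed.
Lemma conj_pw g a n : conj g (pw a n) = pw (conj g a) n.
Proof.
elim: n => [|n IH]; first by rewrite /conj !pw0 gm1 gmV.
by rewrite pwS conjM IH.
Qed.
Lemma conj_inv g a : conj g (inv a) = inv (conj g a).
Proof. by rewrite /conj !gvM gvK gA. Qed.
Lemma conjC g h a : conj g (conj h a) = conj (m g h) a.
Proof. by rewrite /conj gvM !gA. Qed.
Lemma conj1 a : conj one a = a. Proof. by rewrite /conj gv1 g1m gm1. Qed.
Lemma conjK g a : conj (inv g) (conj g a) = a.
Proof. by rewrite conjC gVm conj1. Qed.
Lemma comm_conj g a b : comm a b -> comm (conj g a) (conj g b).
Proof. by move=> ab; rewrite -!conjM ab. Qed.

Lemma centralizerE y g : centralizer cg y g <-> comm y g. Proof. by []. Qed.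

Lemma FC1 : FC cg one.
Proof. by exists [:: one] => g; exists one; rewrite ?inE // /centralizer /= g1m gm1. Qed.

Lemma FCV y : FC cg y -> FC cg (inv y).
Proof.
case=> s hs; exists s => g; have [t ts ht] := hs g; exists t => //.
exact: comm_inv.
Qed.

Lemma FCM a b : FC cg a -> FC cg b -> FC cg (m a b).
Proof.
case=> sa ha [sb hb].
pose P (p : G * G) u := comm a (m (inv p.1) u) /\ comm b (m (inv p.2) u).
exists [seq xget one (P p) | p <- [seq (t1, t2) | t1 <- sa, t2 <- sb]] => g.
have [t1 t1s h1] := ha g; have [t2 t2s h2] := hb g.
have Pg : P (t1, t2) g by [].
exists (xget one (P (t1, t2))).
  by apply/mapP; exists (t1, t2) => //; apply/allpairsP; exists (t1, t2).
have : P (t1, t2) (xget one (P (t1, t2))).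
  by case: xgetP => // /(_ g).
move: (xget one (P (t1, t2))) => u [u1 u2].
rewrite /centralizer /=; apply: comm_sym; apply: comm_mul.
- have -> : m (inv u) g = m (inv (m (inv t1) u)) (m (inv t1) g).
    by rewrite gvM gvK -gA gK.
  apply: comm_sym; apply: comm_mul => //.
  by apply: comm_sym; apply: comm_inv; apply: comm_sym.
- have -> : m (inv u) g = m (inv (m (inv t2) u)) (m (inv t2) g).
    by rewrite gvM gvK -gA gK.
  apply: comm_sym; apply: comm_mul => //.
  by apply: comm_sym; apply: comm_inv; apply: comm_sym.
Qed.

Lemma FCpw a n : FC cg a -> FC cg (pw a n).
Proof. by move=> fa; elim: n => [|n IH]; [exact: FC1| exact: FCM]. Qed.

Lemma FCconj g y : FC cg y -> FC cg (conj g y).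
Proof.
case=> s hs; exists [seq conj g t | t <- s] => z.
have [t ts ht] := hs (conj (inv g) z).
exists (conj g t); first by apply/mapP; exists t.
rewrite /centralizer /=.
have -> : m (inv (conj g t)) z = conj g (m (inv t) (conj (inv g) z)).
  by rewrite conjM -conj_inv -/(conj g (conj (inv g) z)) conjC gmV conj1.
exact: comm_conj.
Qed.


Fixpoint ev (l : seq G) (e : nat -> nat) : G :=
  match l with
  | [::] => one
  | w :: l' => m (pw w (e 0)) (ev l' (fun i => e i.+1))
  end.

Definition pcomm (l : seq G) := forall u v, u \in l -> v \in l -> comm u v.

Lemma pcomm_tail w l : pcomm (w :: l) -> pcomm l.
Proof. by move=> h u v ul vl; apply: h; rewrite inE ?ul ?vl orbT. Qed.

Lemma ev_ext l e f : (forall i, e i = f i) -> ev l e = ev l f.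
Proof.
elim: l e f => [|w l IH] e f h //=; rewrite h; congr (m _ _); exact: IH.
Qed.

Lemma ev_zero l : ev l (fun _ => 0) = one.
Proof. by elim: l => [|w l IH] //=; rewrite IH g1m. Qed.

Lemma ev_comm_with c l e : (forall w, w \in l -> comm c w) -> comm c (ev l e).
Proof.
elim: l e => [|w l IH] e h /=; first by apply: comm_sym; apply: comm_one.
apply: comm_mul.
  by apply: comm_sym; apply: comm_pw; apply: comm_sym; apply: h; rewrite inE eqxx.
by apply: IH => u ul; apply: h; rewrite inE ul orbT.
Qed.

Lemma ev_add l e f : pcomm l ->
  ev l (fun i => e i + f i) = m (ev l e) (ev l f).
Proof.
elim: l e f => [|w l IH] e f h /=; first by rewrite g1m.
rewrite (IH _ _ (pcomm_tail h)) pwD -!gA; congr (m _ _); rewrite !gA.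
congr (m _ _); apply: comm_pw; apply: ev_comm_with => u ul.
by apply: h; rewrite inE ?eqxx ?ul ?orbT.
Qed.

Lemma ev_scale l k e : pcomm l -> ev l (fun i => k * e i) = pw (ev l e) k.
Proof.
move=> h; elim: k => [|k IH]; first by rewrite (@ev_ext _ _ (fun _ => 0)) ?ev_zero.
rewrite (@ev_ext _ _ (fun i => e i + k * e i)); last by move=> i; rewrite mulSn.
by rewrite (ev_add _ _ h) IH.
Qed.

Lemma ev_commute l e f : pcomm l -> comm (ev l e) (ev l f).
Proof.
move=> h; apply: ev_comm_with => w wl; apply: comm_sym; apply: ev_comm_with => u ul.
exact: h.
Qed.

Lemma ev_mem l w : w \in l -> exists e, ev l e = w.
Proof.
elim: l => [|u l IH] //; rewrite inE => /orP[/eqP->|/IH [e he]].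
  exists (fun i => if i is 0 then 1 else 0) => /=.
  by rewrite ev_zero !gm1.
exists (fun i => if i is j.+1 then e j else 0) => /=.
by rewrite g1m -he; apply: ev_ext.
Qed.

Lemma ev_closed (S : set G) l :
  S one -> (forall a b, S a -> S b -> S (m a b)) -> (forall w, w \in l -> S w) ->
  forall e, S (ev l e).
Proof.
move=> S1 hM; elim: l => [|w l IH] Sl e //=; apply: (hM).
  have Sw : S w by apply: Sl; rewrite inE eqxx.
  elim: (e 0) => [|n IHn] //; rewrite pwS; exact: hM.
by apply: IH => u ul; apply: Sl; rewrite inE ul orbT.
Qed.

Lemma tors l : pcomm l -> exists2 M, 0 < M & forall e f n, 0 < n ->
  ev l (fun i => n * e i) = ev l (fun i => n * f i) ->
  ev l (fun i => M * e i) = ev l (fun i => M * f i).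
Proof.
elim: l => [|w l IH] hl; first by exists 1.
have hl' := pcomm_tail hl.
have [M' M'0 HM] := IH hl'.
have wc : forall e, comm w (ev l e).
  by move=> e; apply: ev_comm_with => u ul; apply: hl; rewrite inE ?eqxx ?ul ?orbT.
have [[r [g [dl [r0 hr]]]]|nope] :=
  pselect (exists r g dl, 0 < r /\ m (pw w r) (ev l g) = ev l dl).
- exists (M' * r); first by rewrite muln_gt0 M'0.
  pose al (e f : nat -> nat) i := e 0 * dl i + r * e i.+1 + f 0 * g i.
  have key : forall e f k, ev l (fun i => k * al e f i) =
      m (ev (w :: l) (fun i => k * r * e i)) (ev l (fun i => k * (e 0 + f 0) * g i)).
    move=> e f k /=.
    rewrite (@ev_ext _ _ (fun i => (k * e 0) * dl i + (k * r * e i.+1 + k * f 0 * g i)));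
      last by move=> i; rewrite /al; ring.
    rewrite (ev_add _ _ hl') (ev_scale _ _ hl') -hr pw_mul; last first.
      exact: comm_pw (wc g).
    rewrite -pwM -(ev_scale _ _ hl') -gA -(ev_add _ _ hl').
    rewrite -gA -(ev_add _ _ hl').
    have -> : r * (k * e 0) = k * r * e 0 by ring.
    congr (m _ _); apply: ev_ext => i; ring.
  move=> e f n n0 H.
  have H2 : ev l (fun i => n * al e f i) = ev l (fun i => n * al f e i).
    rewrite !key.
    have -> : ev (w :: l) (fun i => n * r * e i) = ev (w :: l) (fun i => n * r * f i).
      rewrite (@ev_ext _ _ (fun i => r * (n * e i))); last by move=> i; ring.
      rewrite (@ev_ext _ (fun i => n * r * f i) (fun i => r * (n * f i))); last by move=> i; ring.
      by rewrite (ev_scale r (fun i => n * e i) hl) (ev_scale r (fun i => n * f i) hl) H.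
    by rewrite addnC.
  have := HM _ _ _ n0 H2; rewrite !key addnC; exact: gIr.
- exists M' => // e f n n0 H.
  have key : forall e f n, 0 < n -> e 0 <= f 0 ->
      ev (w :: l) (fun i => n * e i) = ev (w :: l) (fun i => n * f i) ->
      ev (w :: l) (fun i => M' * e i) = ev (w :: l) (fun i => M' * f i).
    move=> e1 f1 n1 n10 le /=.
    rewrite -(subnKC le) mulnDr pwD -gA => /gI H1.
    have ef : f1 0 - e1 0 = 0.
      apply/eqP; apply: contraT; rewrite -lt0n => lt.
      exfalso; apply: nope; exists (n1 * (f1 0 - e1 0)), (fun i => n1 * f1 i.+1),
        (fun i => n1 * e1 i.+1); split; first by rewrite muln_gt0 n10.
      by rewrite H1.
    move: H1; rewrite ef muln0 g1m => /(HM _ _ _ n10) ->.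
    by rewrite addn0.
  case: (leqP (e 0) (f 0)) => le; first exact: key H.
  by apply/esym; apply: key n0 (ltnW le) _; rewrite H.
Qed.

Lemma FC_pow_comm y a : FC cg y -> exists2 d, 0 < d & comm y (pw a d).
Proof.
case=> s hs.
pose P i t := t \in s /\ comm y (m (inv t) (pw a i)).
have Pi : forall i, P i (xget one (P i)).
  move=> i; have [t ts ht] := hs (pw a i); exact: (@xgetI _ one (P i) t).
pose T := [seq xget one (P i) | i <- iota 0 (size s).+1].
have : ~~ uniq T.
  apply/negP => uT.
  have hsub : {subset T <= s} by move=> t /mapP [i _ ->]; case: (Pi i).
  by have := uniq_leq_size uT hsub; rewrite size_map size_iota ltnn.
move/(uniqPn one) => [i [j [ij jT]]].
have jT' : j < (size s).+1 by move: jT; rewrite size_map size_iota.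
rewrite !(nth_map 0) ?size_iota ?(ltn_trans ij) // !nth_iota ?(ltn_trans ij) //.
rewrite !add0n => eij.
exists (j - i); first by rewrite subn_gt0.
have [_ hi] := Pi i; have [_ hj] := Pi j; rewrite -eij in hj.
move: (xget one (P i)) hi hj => t hi hj.
have -> : pw a (j - i) = m (inv (m (inv t) (pw a i))) (m (inv t) (pw a j)).
  by rewrite gvM gvK -gA gK -[in RHS](subnKC (ltnW ij)) pwD gKV.
apply: comm_mul => //; apply: comm_sym; apply: comm_inv; exact: comm_sym.
Qed.

Lemma FC_pow_comm_list (ws : seq G) (a : G) : (forall w, w \in ws -> FC cg w) ->
  exists2 d, 0 < d & forall w, w \in ws -> comm w (pw a d).
Proof.
elim: ws => [|w ws IH] h; first by exists 1.
have [d1 d10 h1] := FC_pow_comm a (h w (mem_head _ _)).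
have [d2 d20 h2] := IH (fun u uw => h u (@mem_behead _ (w :: ws) u uw)).
exists (d1 * d2); first by rewrite muln_gt0 d10.
move=> u; rewrite inE => /orP[/eqP->|uw].
  rewrite pwM; apply: comm_sym; apply: comm_pw; exact: comm_sym.
rewrite mulnC pwM; apply: comm_sym; apply: comm_pw; apply: comm_sym; exact: h2.
Qed.

Lemma conj_fix c y : comm y c -> conj c y = y.
Proof. by move=> h; rewrite /conj -h gKr. Qed.

Theorem groupB y : FC cg y -> exists2 k, 0 < k & exists N : set G,
  [/\ N (pw y k), abstract_subgroup cg N, torsion_free cg N,
      abelian_set cg N & normal_in_G cg N /\ N `<=` FC cg].
Proof.
move=> fy; have [s hs] := fy.
pose K := [seq conj t y | t <- s].
have K1 : forall g, conj g y \in K.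
  move=> g; have [t ts ht] := hs g; apply/mapP; exists t => //.
  have -> : g = m t (m (inv t) g) by rewrite gK.
  by rewrite -conjC (conj_fix ht).
have KFC : forall k, k \in K -> FC cg k.
  by move=> k /mapP [t _ ->]; apply: FCconj.
have [d d0 hd] := FC_pow_comm_list y KFC.
pose z := pw y d.
have CZ : forall g1 g2, comm (conj g1 z) (conj g2 z).
  move=> g1 g2; pose h := m (inv g1) g2.
  have c1 : comm (conj h z) z.
    by rewrite /z conj_pw; apply: comm_pw; apply: hd; apply: K1.
  have := comm_conj g1 c1; rewrite conjC /h gK => ->. by [].
pose L0 := [seq pw k d | k <- K].
pose l := L0 ++ map inv L0.
have L0form : forall u, u \in L0 -> exists g, u = conj g z.
  by move=> u /mapP [k /mapP [t _ ->] ->]; exists t; rewrite /z conj_pw.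
have Lform : forall u, u \in l -> exists g, u = conj g z \/ u = inv (conj g z).
  move=> u; rewrite mem_cat => /orP[/L0form [g ->]|/mapP [u' /L0form [g ->] ->]].
    by exists g; left.
  by exists g; right.
have pl : pcomm l.
  move=> u v /Lform [g1 [->|->]] /Lform [g2 [->|->]].
  - exact: CZ.
  - by apply: comm_sym; apply: comm_inv; apply: CZ.
  - by apply: comm_inv; apply: CZ.
  - by apply: comm_inv; apply: comm_sym; apply: comm_inv; apply: CZ.
have Lconj : forall g u, u \in l -> conj g u \in l.
  have h0 : forall g u, u \in L0 -> conj g u \in L0.
    move=> g u /mapP [k /mapP [t _ ->] ->]; apply/mapP; exists (conj g (conj t y)).
      by rewrite conjC.
    by rewrite conj_pw.
  move=> g u; rewrite !mem_cat => /orP[/(h0 g) ->//|/mapP [u' u'L ->]].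
  by rewrite conj_inv map_f ?orbT // h0.
have Linv : forall u, u \in l -> inv u \in l.
  move=> u; rewrite !mem_cat => /orP[uL|/mapP [u' u'L ->]].
    by rewrite map_f ?orbT.
  by rewrite gvK u'L.
have evinv : forall e, exists e', ev l e' = inv (ev l e).
  apply: (@ev_closed (fun a => exists e', ev l e' = inv a) l).
  - by exists (fun _ => 0); rewrite ev_zero gv1.
  - move=> a b [ea ha] [eb hb]; exists (fun i => eb i + ea i).
    by rewrite (ev_add _ _ pl) ha hb gvM.
  - by move=> w /Linv /ev_mem.
have evconj : forall g e, exists e', ev l e' = conj g (ev l e).
  move=> g; apply: (@ev_closed (fun a => exists e', ev l e' = conj g a) l).
  - by exists (fun _ => 0); rewrite ev_zero /conj gm1 gmV.
  - move=> a b [ea ha] [eb hb]; exists (fun i => ea i + eb i).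
    by rewrite (ev_add _ _ pl) ha hb conjM.
  - by move=> w /(Lconj g) /ev_mem.
have evFC : forall e, FC cg (ev l e).
  apply: (@ev_closed (FC cg) l); [exact: FC1|exact: FCM|].
  move=> w; rewrite mem_cat => /orP[/mapP [k kK ->]|/mapP [u /mapP [k kK ->] ->]].
    by apply: FCpw; apply: KFC.
  by apply: FCV; apply: FCpw; apply: KFC.
have zl : z \in l.
  rewrite mem_cat; apply/orP; left; apply: map_f; by have := K1 one; rewrite conj1.
have [ez hez] := ev_mem zl.
have [M M0 HM] := tors pl.
pose N := fun a => exists e, a = ev l (fun i => M * e i).
have N_ev : forall e, N (pw (ev l e) M) by move=> e; exists e; rewrite (ev_scale _ _ pl).
exists (d * M); first by rewrite muln_gt0 d0.
exists N; split.
- by rewrite pwM -/z -hez.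
- split.
  + by exists (fun _ => 0); rewrite (@ev_ext _ _ (fun _ => 0)) ?ev_zero // => i; rewrite muln0.
  + move=> a b [ea ->] [eb ->]; exists (fun i => ea i + eb i).
    by rewrite -(ev_add _ _ pl); apply: ev_ext => i; rewrite mulnDr.
  + move=> a [e ->]; have [e' he'] := evinv e.
    by rewrite (ev_scale _ _ pl) inv_pw -he'.
- move=> a n [e ->] n0 h.
  have := HM e (fun _ => 0) (M * n); rewrite muln_gt0 M0 n0 => /(_ isT).
  rewrite (@ev_ext _ (fun i => M * n * e i) (fun i => n * (M * e i))); last first.
    by move=> i; ring.
  rewrite (ev_scale _ _ pl) h.
  rewrite !(@ev_ext _ (fun i => _ * 0) (fun _ => 0)) ?ev_zero; try by move=> i; rewrite muln0.
  by move/(_ erefl).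
- by move=> a b [ea ->] [eb ->]; apply: ev_commute.
- split.
  + move=> g a [e ->]; rewrite (ev_scale _ _ pl).
    have -> : m (m g (pw (ev l e) M)) (inv g) = conj g (pw (ev l e) M) by [].
    by rewrite conj_pw; have [e' <-] := evconj g e; apply: N_ev.
  + by move=> a [e ->].
Qed.


Local Open Scope ring_scope.

Lemma lmul_cont g : continuous (fun z => m g z).
Proof.
move=> z; apply: (@continuous2_cvg _ _ _ _ _ _ (fun _ => g) id (gmul cg) g z).
- by move: (@gmul_cont _ cg (g, z)).
- exact: cvg_cst.
- exact: cvg_id.
Qed.

Lemma rmul_cont g : continuous (fun z => m z g).
Proof.
move=> z; apply: (@continuous2_cvg _ _ _ _ _ _ id (fun _ => g) (gmul cg) z g).
- by move: (@gmul_cont _ cg (z, g)).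
- exact: cvg_id.
- exact: cvg_cst.
Qed.

Lemma cont_meas (f : G -> G) (A : set (Borel G)) :
  continuous f -> measurable A -> measurable (f @^-1` A : set (Borel G)).
Proof.
move=> fc mA.
have mf : measurable_fun [set: Borel G] (f : Borel G -> Borel G).
  eapply (@measurability _ _ (Borel G) (Borel G) _ _ (@open G)); first by [].
  move=> _ [B oB <-]; apply: sub_sigma_algebra; rewrite setTI.
  by apply: open_comp => // x _; apply: fc.
by have := mf measurableT A mA; rewrite setTI.
Qed.

Lemma closed_meas (C : set G) : closed C -> measurable (C : set (Borel G)).
Proof.
move=> cC; rewrite -(setCK C); apply: measurableC; apply: sub_sigma_algebra.
exact: closed_openC.
Qed.

Lemma centralizer_closed h : closed (centralizer cg h).
Proof.
move=> g gcl; apply: (g_hausdorff cg) => A B hA hB.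
have n1 : nbhs g ((fun z => m h z) @^-1` A) by apply: lmul_cont.
have n2 : nbhs g ((fun z => m z h) @^-1` B) by apply: rmul_cont.
have [z [zc [zA zB]]] := gcl _ (filterI n1 n2).
by exists (m h z); split => //; rewrite zc.
Qed.

Lemma transE g (A : set G) :
  [set m g a | a in A] = (fun z => m (inv g) z) @^-1` A.
Proof.
apply/seteqP; split => z.
  by case=> a Aa <-; rewrite /= gKV.
by move=> /= Az; exists (m (inv g) z) => //; rewrite gK.
Qed.

Lemma trans_meas g (A : set (Borel G)) :
  measurable A -> measurable ([set m g a | a in A] : set (Borel G)).
Proof. by move=> mA; rewrite transE; apply: cont_meas => //; apply: lmul_cont. Qed.


Fixpoint Ulist (I : Type) (F : I -> set G) (s : seq I) : set G :=
  match s with [::] => set0 | i :: s' => F i `|` Ulist F s' end.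

Fixpoint dlist (I : Type) (F : I -> set G) (s : seq I) : Prop :=
  match s with [::] => True | i :: s' => F i `&` Ulist F s' = set0 /\ dlist F s' end.

Lemma Ulist_mem (I : eqType) (F : I -> set G) s z :
  Ulist F s z -> exists2 i, i \in s & F i z.
Proof.
elim: s => [|i s IH] //= [Fz|/IH [j js Fj]].
  by exists i; rewrite ?mem_head.
by exists j; rewrite // inE js orbT.
Qed.

Variable R : realType.

Lemma Ulist_meas (I : Type) (F : I -> set (Borel G)) s :
  (forall i, measurable (F i)) -> measurable (Ulist F s : set (Borel G)).
Proof.
move=> mF; elim: s => [|i s IH] /=; first exact: measurable0.
exact: measurableU.
Qed.

Lemma Ulist_bound (mu : probability (Borel G) R) (I : Type)
    (F : I -> set (Borel G)) (rho : R) s :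
  (forall i, measurable (F i)) -> (forall i, (rho%:E <= mu (F i))%E) ->
  dlist F s -> (((size s)%:R * rho)%:E <= mu (Ulist F s))%E.
Proof.
move=> mF hF; elim: s => [|i s IH] /=; first by rewrite mul0r.
move=> [dis ds]; rewrite measureU //; last exact: Ulist_meas.
rewrite -add1n natrD mulrDl mul1r EFinD.
by apply: leeD; [exact: hF | exact: IH].
Qed.

Lemma archi_contra (rho : R) : 0 < rho -> exists n : nat, 1 < n%:R * rho.
Proof.
move=> r0; exists (Num.truncn rho^-1).+1.
by rewrite -ltr_pdivrMr // div1r; apply: Num.Theory.truncnS_gt.
Qed.

Lemma bound_contra (mu : probability (Borel G) R) (I : Type)
    (F : I -> set (Borel G)) (rho : R) :
  0 < rho -> (forall i, measurable (F i)) -> (forall i, (rho%:E <= mu (F i))%E) ->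
  (forall n, exists s : seq I, size s = n /\ dlist F s) -> False.
Proof.
move=> r0 mF hF hs; have [n hn] := archi_contra r0.
have [s [sn ds]] := hs n.
have := Ulist_bound (mu := mu) mF hF ds; rewrite sn => h.
have := le_trans h (probability_le1 mu (Ulist_meas s mF)).
by rewrite lee_fin leNgt hn.
Qed.


Lemma FC_meas (muG : probability (Borel G) R) h (rho : R) :
  haar_of cg [set: G] muG -> 0 < rho ->
  (rho%:E <= muG (centralizer cg h : set (Borel G)))%E -> FC cg h.
Proof.
move=> [_ hinv _ _] r0 hC.
have [//|nFC] := pselect (FC cg h); exfalso.
pose C : set (Borel G) := centralizer cg h.
have mC : measurable C := closed_meas (@centralizer_closed h).
pose F (g : G) : set (Borel G) := [set m g a | a in C].
apply: (@bound_contra muG G F rho r0).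
- by move=> g; apply: trans_meas.
- by move=> g; rewrite /F hinv.
- elim => [|n [s [sn ds]]]; first by exists [::].
  have : ~ (forall g, exists2 t, t \in s & centralizer cg h (m (inv t) g)).
    by move=> H; apply: nFC; exists s.
  move=> /existsNP [g hg].
  exists (g :: s); split; first by rewrite /= sn.
  split => //; apply/seteqP; split => // z [[a Ca <-]] /Ulist_mem [t ts [b Cb e]].
  apply: hg; exists t => //.
  have -> : m (inv t) g = m b (inv a).
    by rewrite -[g](gKr a) -e gA gKV.
  rewrite /centralizer /=; apply: comm_mul => //.
  by apply: comm_sym; apply: comm_inv; apply: comm_sym.
Qed.

Lemma dlist_iota (F : nat -> set G) :
  (forall i j, (i < j)%N -> F i `&` F j = set0) -> forall n a, dlist F (iota a n).
Proof.
move=> hF; elim => [|n IH] a //=; split => //.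
apply/seteqP; split => // z [Fz /Ulist_mem [j]]; rewrite mem_iota => /andP [aj _] Fj.
have := hF a j aj; rewrite -subset0 => /(_ z); apply; by split.
Qed.

Lemma exists_FC_pow (muH : probability (Borel G) R) x (B : set (Borel G)) :
  haar_of cg (topgen cg x) muH -> measurable B -> (0 < muH B)%E ->
  B `<=` FC cg -> exists2 e, (0 < e)%N & FC cg (pw x e).
Proof.
move=> [_ hinv _ _] mB B0 BFC.
have [//|nF] := pselect (exists2 e, (0 < e)%N & FC cg (pw x e)); exfalso.
have eB : (fine (muH B))%:E = muH B.
  rewrite fineK // ge0_fin_numE ?measure_ge0 //.
  exact: le_lt_trans (probability_le1 muH mB) (ltry 1).
have r0 : 0 < fine (muH B) by rewrite -lte_fin eB.
pose F (j : nat) : set (Borel G) := [set m (pw x j) b | b in B].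
apply: (@bound_contra muH nat F _ r0).
- by move=> j; apply: trans_meas.
- move=> j; rewrite /F hinv // ?eB //.
  by apply: subset_closure; exists j; left.
- move=> n; exists (iota 0 n); split; first by rewrite size_iota.
  apply: dlist_iota => i j ij; apply/seteqP; split => // z [[b Bb <-] [b' Bb' e]].
  apply: nF; exists (j - i)%N; first by rewrite subn_gt0.
  have : b = m (pw x (j - i)%N) b'.
    apply: (@gI (pw x i)); rewrite -e gA -pwD subnKC //.
    exact: ltnW.
  move=> eb; have -> : pw x (j - i)%N = m b (inv b') by rewrite eb gKr.
  by apply: FCM; [apply: BFC | apply: FCV; apply: BFC].
Qed.

Lemma pos_int (muH muG : probability (Borel G) R) :
  (0 < comm_prob cg muH muG)%E -> exists B : set (Borel G), exists rho : R,
  [/\ measurable B, (0 < muH B)%E, 0 < rho &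
      forall b, B b -> (rho%:E <= muG (centralizer cg b : set (Borel G)))%E].
Proof.
rewrite /comm_prob ge0_integralTE; last by move=> h; apply: measure_ge0.
move=> /ereal_sup_gt [_ [hh hhle <-]] sh0.
move: sh0; rewrite sintegralE => sh0.
have [r [[y _ rr] rpos]] : exists r, (exists2 y : Borel G, True & hh y = r) /\
    (0 < r%:E * muH (hh @^-1` [set r]))%E.
  apply: contrapT => H; move: sh0; apply/negP; rewrite -leNgt.
  apply: fsume_le0 => t [y _ ty]; rewrite leNgt; apply/negP => tp; apply: H; exists t.
  by split => //; exists y.
have rge : 0 <= r by rewrite -rr.
have r0 : 0 < r.
  rewrite lt_neqAle rge andbT; apply/negP => /eqP r0.
  by move: rpos; rewrite -r0 mul0e ltxx.
have m0 : (0 < muH (hh @^-1` [set r]))%E.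
  rewrite lt_neqAle measure_ge0 andbT; apply/negP => /eqP m0.
  by move: rpos; rewrite -m0 mule0 ltxx.
exists (hh @^-1` [set r]), r; split => //.
move=> b hb; have {}hb : hh b = r := hb; rewrite -hb; exact: hhle.
Qed.

End Main.

Local Open Scope classical_set_scope.
Local Open Scope ring_scope.

Theorem lemma2p2 (R : realType) (G : ptopologicalType) (cg : compact_group G)
  (x : G) :
  (exists (muH muG : probability (Borel G) R),
      [/\ haar_of cg (topgen cg x) muH, haar_of cg [set: G] muG &
          (0 < comm_prob cg muH muG)%E]) ->
  exists e : nat, (0 < e)%N /\
    exists N : set G,
      [/\ N (gpow cg x e), abstract_subgroup cg N, torsion_free cg N,
          abelian_set cg N & normal_in_G cg N /\ N `<=` FC cg].
Proof.
move=> [muH [muG [hH hG hpos]]].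
have [B [rho [mB B0 r0 hB]]] := pos_int hpos.
have BFC : B `<=` FC cg := fun b Bb => FC_meas hG r0 (hB b Bb).
have [e e0 fe] := exists_FC_pow hH mB B0 BFC.
have [k k0 [N [Nk sub tf ab [nor NFC]]]] := groupB fe.
exists (e * k)%N; split; first by rewrite muln_gt0 e0.
exists N; split => //; by rewrite pwM.
Qed.
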